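(* Let $\delta$ satisfy the Kalmanson conditions with respect to $\pi=(x_1,\dots,x_n)$, let $C_1,\dots,C_m$ be a partition of $X$ into consecutive intervals of $\pi$ in this order, and let $\mu$ be a block weighting. If $1\le i<j\le m$ with $i<j-3$, then there exists $k\in\{1,\dots,m\}$ (indices read cyclically, $C_{m+1}=C_1$) such that \[Q_\delta(C_i,C_j)-Q_\delta(C_k,C_{k+1})\ge0.\]
   Context: $X=\{1,\dots,n\}$. A dissimilarity map is $\delta:X\times X\to\mathbb{R}$ with $\delta(i,j)=\delta(j,i)\ge0$, $\delta(i,i)=0$. A circular ordering is a listing $\pi=(x_1,\dots,x_n)$ of $X$ regarded cyclically. $\delta$ satisfies the Kalmanson conditions with respect to $\pi$ if for all $1\le i<j<k<l\le n$: $\delta(x_i,x_j)+\delta(x_k,x_l)\le\delta(x_i,x_k)+\delta(x_j,x_l)$ and $\delta(x_i,x_l)+\delta(x_j,x_k)\le\delta(x_i,x_k)+\delta(x_j,x_l)$. The partition into consecutive intervals means $C_1=\{x_1,\dots,x_{a_1}\}$, $C_2=\{x_{a_1+1},\dots,x_{a_2}\},\dots,C_m=\{x_{a_{m-1}+1},\dots,x_n\}$. A block weighting is $\mu:X\to\mathbb{R}_{\ge0}$ with $\sum_{x\in C_r}\mu(x)=1$ for every $r$. Set $\delta(C_r,C_s)=\sum_{x\in C_r,y\in C_s}\mu(x)\mu(y)\delta(x,y)$ and $Q_\delta(C_r,C_s)=(m-2)\delta(C_r,C_s)-\sum_{t\ne r}\delta(C_r,C_t)-\sum_{t\ne s}\delta(C_s,C_t)$.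 *)

(* Defs.v *)
From mathcomp Require Import all_boot all_order all_algebra all_fingroup.
Set Implicit Arguments. Unset Strict Implicit. Unset Printing Implicit Defensive.
Import Order.TTheory GRing.Theory Num.Theory.
Local Open Scope ring_scope.

(* X = {1,...,n} is represented by 'I_n (0-indexed).
   A circular ordering pi = (x_1,...,x_n) is a permutation pi : {perm 'I_n};
   x_{p+1} = pi p for the position p : 'I_n. *)

Definition dissimilarity (R : realFieldType) (n : nat) (d : 'I_n -> 'I_n -> R) :=
  (forall x y, d x y = d y x) /\ (forall x y, 0 <= d x y) /\ (forall x, d x x = 0).

Definition kalmanson (R : realFieldType) (n : nat) (d : 'I_n -> 'I_n -> R)
  (pi : {perm 'I_n}) :=
  forall i j k l : 'I_n, (i < j)%N -> (j < k)%N -> (k < l)%N ->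
    d (pi i) (pi j) + d (pi k) (pi l) <= d (pi i) (pi k) + d (pi j) (pi l) /\
    d (pi i) (pi l) + d (pi j) (pi k) <= d (pi i) (pi k) + d (pi j) (pi l).

(* A partition into consecutive intervals C_1,...,C_m of pi (in this order) is
   given by a nondecreasing block map b : positions -> 'I_m (block r is the
   0-indexed version of C_{r+1}). Nonemptiness of the blocks follows from the
   block-weighting condition. *)
Definition consecutive_blocks (n m : nat) (b : 'I_n -> 'I_m) :=
  forall p q : 'I_n, (p <= q)%N -> (b p <= b q)%N.

Definition block (n m : nat) (pi : {perm 'I_n}) (b : 'I_n -> 'I_m) (r : nat)
  : {set 'I_n} := [set pi p | p in [set p : 'I_n | (b p == r :> nat)]].

Definition block_weighting (R : realFieldType) (n m : nat) (pi : {perm 'I_n})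
  (b : 'I_n -> 'I_m) (mu : 'I_n -> R) :=
  (forall x, 0 <= mu x) /\
  (forall r : 'I_m, \sum_(x in block pi b r) mu x = 1).

Definition dblock (R : realFieldType) (n m : nat) (d : 'I_n -> 'I_n -> R)
  (pi : {perm 'I_n}) (b : 'I_n -> 'I_m) (mu : 'I_n -> R) (r s : nat) : R :=
  \sum_(x in block pi b r) \sum_(y in block pi b s) mu x * mu y * d x y.

Definition Qd (R : realFieldType) (n m : nat) (d : 'I_n -> 'I_n -> R)
  (pi : {perm 'I_n}) (b : 'I_n -> 'I_m) (mu : 'I_n -> R) (r s : nat) : R :=
  (m%:R - 2) * dblock d pi b mu r s
  - \sum_(t < m | (t : nat) != r) dblock d pi b mu r t
  - \sum_(t < m | (t : nat) != s) dblock d pi b mu s t.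

(* Main.v *)
Require Import Defs.
From mathcomp Require Import all_boot all_order all_algebra all_fingroup.
From mathcomp Require Import ring lra zify.
Set Implicit Arguments. Unset Strict Implicit. Unset Printing Implicit Defensive.
Import Order.TTheory GRing.Theory Num.Theory.
Local Open Scope ring_scope.

Unset Implicit Arguments.
Definition KalZ (R : realFieldType) (Z : nat -> nat -> R) (m : nat) :=
  forall a b c d, (a < b)%N -> (b < c)%N -> (c < d)%N -> (d < m)%N ->
    Z a b + Z c d <= Z a c + Z b d /\ Z a d + Z b c <= Z a c + Z b d.

Arguments KalZ {R} Z m.
Set Implicit Arguments.
Definition QZ (R : realFieldType) (Z : nat -> nat -> R) (m r s : nat) : R :=
  (m%:R - 2) * Z r s - \sum_(t < m) Z r t - \sum_(t < m) Z s t.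

Lemma sum_cat (R : realFieldType) (F : nat -> R) a b c : (a <= b)%N -> (b <= c)%N ->
  \sum_(a <= i < c) F i = \sum_(a <= i < b) F i + \sum_(b <= i < c) F i.
Proof. exact: big_cat_nat. Qed.

Section Core.
Unset Implicit Arguments.
Variables (R : realFieldType) (Z : nat -> nat -> R) (m L : nat).
Hypothesis hZ0 : forall x, Z x x = 0.
Hypothesis hsym : forall x y, Z x y = Z y x.
Hypothesis hK : KalZ Z m.

Definition bk k x := Z 0 L - Z 0 x - Z L x + Z k x + Z k.+1 x - Z k k.+1.
Definition FF x := \sum_(0 <= k < L) bk k x.
Definition Ee t := Z 0 L - Z 0 t - Z L t.

Lemma lemA k : QZ Z m 0 L - QZ Z m k k.+1
  = \sum_(t < m) bk k t - 2 * (Z 0 L - Z k k.+1).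
Proof.
rewrite /bk sumrB big_split /= big_split /= sumrB /= sumrB /= !sumr_const !card_ord /QZ.

rewrite -[Z 0 L *+ m]mulr_natl -[Z k k.+1 *+ m]mulr_natl. ring.
Qed.


Ltac kal a b c d := let H1 := fresh "K" in let H2 := fresh "K" in
  have [H1 H2] := hK a b c d ltac:(lia) ltac:(lia) ltac:(lia) ltac:(lia).

Lemma bk_ge0 k x : (k < L)%N -> (L < x)%N -> (x < m)%N -> 0 <= bk k x.
Proof.
move=> hkL hLx hxm; rewrite /bk.
case: (posnP k) => [->|hk].
- case: (ltnP 1 L) => h1.
  + kal 0%N 1%N L x. lra.
  + have eL : L = 1%N by lia.
    rewrite eL. lra.
- case: (ltnP k.+1 L) => h2.
  + kal 0%N k k.+1 x. kal 0%N k.+1 L x. lra.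
  + have eL : k.+1 = L by lia.
    kal 0%N k L x. rewrite eL. lra.
Qed.

Lemma left_ge0 k t : (k.+2 <= t)%N -> (t < L)%N -> (L + t < m)%N ->
  0 <= bk k t + bk k.+1 (L + t).
Proof.
move=> hkt htL hm; rewrite /bk.
have s1 := hsym L t.
kal 0%N k.+1 t L. kal 0%N k.+1 L (L+t)%N. kal 0%N k.+2 L (L+t)%N.
case: (posnP k) => [ek|hk]; case: (ltnP k.+2 t) => h2.
- kal 0%N k.+1 k.+2 t. rewrite ek in K K0 K1 K2 K3 K4 K5 K6 *. lra.
- have et : t = k.+2 by lia. rewrite ek in et K K0 K1 K2 K3 K4 *. rewrite et in s1 K K0 K1 K2 K3 K4 *. lra.
- kal 0%N k.+1 k.+2 t. kal 0%N k k.+1 t. lra.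
- kal 0%N k k.+1 t. have et : t = k.+2 by lia. rewrite et in s1 K K0 K1 K2 K3 K4 K5 K6 *. lra.
Qed.

Lemma right_ge0 c t : (t <= c)%N -> (c.+1 < L)%N -> (L + t < m)%N -> (0 < t)%N ->
  0 <= bk c.+1 t + bk c (L + t).
Proof.
move=> htc hcL hm ht0; rewrite /bk.
have s1 := hsym L t. have s2 := hsym c.+1 t. have s3 := hsym c.+2 t.
kal 0%N t c.+1 c.+2. kal 0%N c L (L+t)%N. kal 0%N c.+1 L (L+t)%N.
case: (ltnP t c) => h.
- kal t c c.+1 L. lra.
- have ec : c = t by lia. subst c. lra.
Qed.


Lemma lemC x : (L < x)%N -> (x < m)%N -> 0 <= FF x.
Proof.
move=> h1 h2; rewrite /FF big_nat_cond; apply: sumr_ge0 => k /andP[/andP[_ hk] _].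
exact: bk_ge0.
Qed.

Lemma lemD t : (0 < t)%N -> (t < L)%N -> (L + t < m)%N ->
  0 <= FF t - 2 * Ee t + FF (L + t).
Proof.
move=> ht0 htL hm.
case: t ht0 htL hm => [//|s] _ htL hm.
have eL : L = L.-1.+1 by lia.
set l := L.-1 in eL.
set T := (L + s.+1)%N.
rewrite /FF.
have -> : \sum_(0 <= k < L) bk k s.+1 = \sum_(0 <= k < l.+1) bk k s.+1 by rewrite -eL.
have -> : \sum_(0 <= k < L) bk k T = \sum_(0 <= k < l.+1) bk k T by rewrite -eL.
have Ht : \sum_(0 <= k < l.+1) bk k s.+1 = \sum_(0 <= k < s) bk k s.+1
   + bk s s.+1 + bk s.+1 s.+1 + \sum_(s.+1 <= k < l) bk k.+1 s.+1.
  rewrite (big_cat_nat (n:=s)); try lia.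
  rewrite (big_ltn (m:=s)); last lia.
  rewrite (big_ltn (m:=s.+1)); last lia.
  rewrite big_add1 /=. by rewrite !addrA.
have HT : \sum_(0 <= k < l.+1) bk k T = bk 0 T + \sum_(0 <= k < s) bk k.+1 T
   + \sum_(s.+1 <= k < l) bk k T + bk l T.
  rewrite (big_ltn (m:=0)) //.
  rewrite big_nat_recr /=; last lia.
  rewrite (big_cat_nat (n:=s.+1) (m:=1) (p:=l)); try lia.
  rewrite big_add1 /=. by rewrite !addrA.
rewrite Ht HT.
have HA : 0 <= \sum_(0 <= k < s) (bk k s.+1 + bk k.+1 T).
  rewrite big_nat_cond; apply: sumr_ge0 => k /andP[/andP[_ hk] _].
  apply: left_ge0 => //; lia.
have HB : 0 <= \sum_(s.+1 <= k < l) (bk k.+1 s.+1 + bk k T).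
  rewrite big_nat_cond; apply: sumr_ge0 => k /andP[/andP[hk1 hk] _].
  apply: right_ge0 => //; lia.
rewrite big_split /= in HA. rewrite big_split /= in HB.
have H0 : 0 <= bk 0 T by apply: bk_ge0; lia.
have Hl : 0 <= bk l T by apply: bk_ge0; lia.
have E1 : bk s s.+1 = Ee s.+1 by rewrite /bk /Ee hZ0; ring.
have E2 : bk s.+1 s.+1 = Ee s.+1 by rewrite /bk /Ee hZ0 (hsym s.+2 s.+1); ring.
rewrite E1 E2.
lra.
Qed.


Lemma sum_aux (g : nat -> R) (c : R) n :
  \sum_(0 <= k < n.+1) (g k + g k.+1 - 2 * c)
  = g 0%N + g n.+1 + 2 * \sum_(1 <= k < n.+1) g k - (2 * c) *+ n.+1.
Proof.
rewrite sumrB big_split /= sumr_const_nat subn0.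
rewrite (big_ltn (m:=0)) //.
have -> : \sum_(0 <= k < n.+1) g k.+1 = \sum_(1 <= k < n.+1) g k + g n.+1.
  by rewrite -big_nat_recr // big_add1.
ring.
Qed.

Lemma lemB : (0 < L)%N ->
  FF 0 + FF L - 2 * \sum_(0 <= k < L) (Z 0 L - Z k k.+1)
  + 2 * \sum_(1 <= t < L) Ee t = 0.
Proof.
move=> hL.
have -> : FF 0 + FF L - 2 * \sum_(0 <= k < L) (Z 0 L - Z k k.+1)
   = \sum_(0 <= k < L) ((Z k 0%N + Z k L) + (Z k.+1 0%N + Z k.+1 L) - 2 * Z 0 L).
  rewrite /FF mulr_sumr -big_split -sumrB /=; apply: eq_bigr => k _.
  rewrite /bk !hZ0 (hsym L 0); ring.
have -> : \sum_(1 <= t < L) Ee t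
   = \sum_(1 <= t < L) Z 0 L - \sum_(1 <= t < L) (Z t 0%N + Z t L).
  rewrite -sumrB; apply: eq_bigr => t _; rewrite /Ee (hsym 0 t) (hsym L t); ring.
have := sum_aux (fun k => Z k 0%N + Z k L) (Z 0 L) L.-1.
rewrite prednK // => ->.
rewrite sumr_const_nat !hZ0 (hsym L 0).
have -> : (L - 1)%N = L.-1 by rewrite subn1.
have hS : forall x : R, x *+ L = x *+ L.-1 + x by move=> x; rewrite -mulrSr prednK.
rewrite ?prednK // hS.
ring.
Qed.

Lemma core : (0 < L)%N -> (L + L <= m)%N ->
  0 <= \sum_(0 <= k < L) (QZ Z m 0 L - QZ Z m k k.+1).
Proof.
move=> hL hm.
under eq_bigr => k _ do rewrite lemA.
rewrite sumrB exchange_big /= -mulr_sumr.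
have -> : \sum_(t < m) \sum_(0 <= k < L) bk k t = \sum_(t < m) FF t by [].
rewrite -(big_mkord xpredT).
rewrite (@sum_cat _ _ 0 1); try lia.
rewrite (@sum_cat _ _ 1 L); try lia.
rewrite (@sum_cat _ _ L L.+1); try lia.
rewrite (@sum_cat _ _ L.+1 (L+L)); try lia.
rewrite !big_nat1.
have -> : \sum_(L.+1 <= t < L + L) FF t = \sum_(1 <= t < L) FF (L + t).
  rewrite (_ : L.+1 = 1 + L)%N // big_addn addnK.
  by apply: eq_bigr => t _; rewrite addnC.
have HB := lemB hL.
have HD : 0 <= \sum_(1 <= t < L) (FF t - 2 * Ee t + FF (L + t)).
  rewrite big_nat_cond; apply: sumr_ge0 => t /andP[/andP[h1 h2] _].
  apply: lemD => //; lia.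
rewrite big_split /= sumrB -mulr_sumr in HD.
have HC : 0 <= \sum_((L + L)%N <= t < m) FF t.
  rewrite big_nat_cond; apply: sumr_ge0 => t /andP[/andP[h1 h2] _].
  apply: lemC => //; lia.
lra.
Qed.

End Core.
Set Implicit Arguments.

Lemma exists_ge0 (R : realFieldType) (f : nat -> R) L : (0 < L)%N ->
  0 <= \sum_(0 <= k < L) f k -> exists2 k, (k < L)%N & 0 <= f k.
Proof.
elim: L => [//|L IH] _.
rewrite big_nat_recr //= => hs.
case: (lerP 0 (f L)) => h; first by exists L.
case: (posnP L) => [eL|hL].
  by subst L; move: hs; rewrite big_geq //= add0r => h2; exfalso; lra.
have [k hk hfk] := IH hL ltac:(lra).
by exists k => //; apply: ltnW.
Qed.

Definition rot (R : realFieldType) (Z : nat -> nat -> R) (m c : nat) :=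
  fun x y => Z ((x + c) %% m)%N ((y + c) %% m)%N.

Lemma modS_cases x c m : (x < m)%N -> (c < m)%N ->
  ((x + c) %% m = x + c /\ x + c < m)%N \/ ((x + c) %% m = x + c - m /\ m <= x + c)%N.
Proof.
move=> hx hc; case: (ltnP (x + c) m) => h.
  by left; rewrite modn_small.
right; split => //.
have e : (x + c = (x + c - m) + m)%N by lia.
by rewrite {1}e modnDr modn_small //; lia.
Qed.

Lemma rot_kal (R : realFieldType) (Z : nat -> nat -> R) m c :
  (forall x y, Z x y = Z y x) -> KalZ Z m -> (c < m)%N -> KalZ (rot Z m c) m.
Proof.
move=> hs hK hc a b c' d hab hbc hcd hdm; rewrite /rot.
have Ha := modS_cases (x:=a) (m:=m) ltac:(lia) hc.
have Hb := modS_cases (x:=b) (m:=m) ltac:(lia) hc.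
have Hc := modS_cases (x:=c') (m:=m) ltac:(lia) hc.
have Hd := modS_cases (x:=d) (m:=m) ltac:(lia) hc.
move: ((a + c) %% m)%N ((b + c) %% m)%N ((c' + c) %% m)%N ((d + c) %% m)%N Ha Hb Hc Hd.
move=> a' b' c2 d' Ha Hb Hc Hd.
have s1 := hs a' b'. have s2 := hs a' c2. have s3 := hs a' d'.
have s4 := hs b' c2. have s5 := hs b' d'. have s6 := hs c2 d'.
case: Ha => -[ea ha]; case: Hb => -[eb hb]; case: Hc => -[ec hc2]; case: Hd => -[ed hd];
  try (exfalso; lia);
  first [ have [K1 K2] := hK a' b' c2 d' ltac:(lia) ltac:(lia) ltac:(lia) ltac:(lia)
        | have [K1 K2] := hK d' a' b' c2 ltac:(lia) ltac:(lia) ltac:(lia) ltac:(lia)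
        | have [K1 K2] := hK c2 d' a' b' ltac:(lia) ltac:(lia) ltac:(lia) ltac:(lia)
        | have [K1 K2] := hK b' c2 d' a' ltac:(lia) ltac:(lia) ltac:(lia) ltac:(lia) ];
  split; lra.
Qed.

Lemma QZ_rot (R : realFieldType) (Z : nat -> nat -> R) m c x y : (0 < m)%N ->
  QZ (rot Z m c) m x y = QZ Z m ((x + c) %% m) ((y + c) %% m).
Proof.
move=> hm.
pose h (t : 'I_m) : 'I_m := Ordinal (ltn_pmod (t + c) hm).
have hinj : injective h.
  move=> t1 t2 e; apply: val_inj; have := congr1 val e; rewrite /= => /eqP.
  by rewrite eqn_modDr !modn_small // => /eqP.
have E u : \sum_(t < m) Z u ((t + c) %% m)%N = \sum_(t < m) Z u t.
  by rewrite [RHS](reindex_inj hinj).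
by rewrite /QZ /rot !E.
Qed.

Lemma QZ_sym (R : realFieldType) (Z : nat -> nat -> R) m x y :
  (forall x y, Z x y = Z y x) -> QZ Z m x y = QZ Z m y x.
Proof. move=> hs; rewrite /QZ hs; ring. Qed.

Lemma main_rot (R : realFieldType) (Z : nat -> nat -> R) m c L :
  (forall x, Z x x = 0) -> (forall x y, Z x y = Z y x) -> KalZ Z m ->
  (c < m)%N -> (0 < L)%N -> (L + L <= m)%N ->
  exists2 k, (k < m)%N & 0 <= QZ Z m c ((L + c) %% m) - QZ Z m k ((k + 1) %% m).
Proof.
move=> h0 hs hK hc hL hLm.
have hm : (0 < m)%N by lia.
have h0' : forall x, rot Z m c x x = 0 by move=> x; rewrite /rot h0.
have hs' : forall x y, rot Z m c x y = rot Z m c y x by move=> x y; rewrite /rot hs.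
have hK' := rot_kal hs hK hc.
have := @core R (rot Z m c) m L h0' hs' hK' hL hLm.
move=> /(exists_ge0 hL) [k hk].
rewrite !QZ_rot // add0n (modn_small hc) => H.
exists ((k + c) %% m)%N; first exact: ltn_pmod.
by rewrite modnDml (_ : (k + c + 1 = k.+1 + c)%N) //; lia.
Qed.

Set Implicit Arguments. Unset Strict Implicit. Unset Printing Implicit Defensive.
Import Order.TTheory GRing.Theory Num.Theory.
Local Open Scope ring_scope.

Lemma sum_block (R : realFieldType) n m (pi : {perm 'I_n}) (b : 'I_n -> 'I_m)
  (F : 'I_n -> R) (r : nat) :
  \sum_(x in block pi b r) F x = \sum_(p | b p == r :> nat) F (pi p).
Proof.
rewrite /block big_imset /=; last by move=> p q _ _ /perm_inj.
by apply: eq_bigl => p; rewrite inE.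
Qed.

Lemma dblockE (R : realFieldType) n m (d : 'I_n -> 'I_n -> R) (pi : {perm 'I_n})
  (b : 'I_n -> 'I_m) (mu : 'I_n -> R) r s :
  dblock d pi b mu r s = \sum_(p | b p == r :> nat) \sum_(q | b q == s :> nat)
     mu (pi p) * mu (pi q) * d (pi p) (pi q).
Proof. by rewrite /dblock sum_block; apply: eq_bigr => p _; rewrite sum_block. Qed.

Lemma dblock_sym (R : realFieldType) n m (d : 'I_n -> 'I_n -> R) (pi : {perm 'I_n})
  (b : 'I_n -> 'I_m) (mu : 'I_n -> R) r s :
  (forall x y, d x y = d y x) ->
  dblock d pi b mu r s = dblock d pi b mu s r.
Proof.
move=> hs; rewrite !dblockE exchange_big; apply: eq_bigr => p _; apply: eq_bigr => q _.
by first [rewrite (hs (pi p)); ring | rewrite (hs (pi q)); ring].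
Qed.

Lemma sumD (R : realFieldType) (I : finType) (P : pred I) (F G : I -> R) :
  \sum_(i | P i) (F i + G i) = \sum_(i | P i) F i + \sum_(i | P i) G i.
Proof. exact: big_split. Qed.

Section BK.
Unset Implicit Arguments.
Variables (R : realFieldType) (n m : nat) (d : 'I_n -> 'I_n -> R) (pi : {perm 'I_n})
  (b : 'I_n -> 'I_m) (mu : 'I_n -> R).
Hypotheses (hd : dissimilarity d) (hK : kalmanson d pi) (hb : consecutive_blocks b)
  (hmu : block_weighting pi b mu).
Variables a1 a2 a3 a4 : nat.
Hypotheses (h12 : (a1 < a2)%N) (h23 : (a2 < a3)%N) (h34 : (a3 < a4)%N) (h4m : (a4 < m)%N).

Definition ww p := mu (pi p).
Definition DD p q := d (pi p) (pi q).

Lemma sumw r : (r < m)%N -> \sum_(p | b p == r :> nat) ww p = 1.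
Proof. move=> hr; have := hmu.2 (Ordinal hr); by rewrite sum_block. Qed.

Lemma coll r (hr : (r < m)%N) X : \sum_(q | b q == r :> nat) ww q * X = X.
Proof. by rewrite -mulr_suml sumw // mul1r. Qed.

Definition S4 (f : 'I_n -> 'I_n -> 'I_n -> 'I_n -> R) :=
  \sum_(p | b p == a1 :> nat) ww p * \sum_(q | b q == a2 :> nat) ww q *
  \sum_(r | b r == a3 :> nat) ww r * \sum_(s | b s == a4 :> nat) ww s * f p q r s.

Lemma dblock2 r s : dblock d pi b mu r s =
  \sum_(p | b p == r :> nat) ww p * \sum_(q | b q == s :> nat) ww q * DD p q.
Proof.
rewrite dblockE; apply: eq_bigr => p _; rewrite mulr_sumr; apply: eq_bigr => q _.
by rewrite /ww /DD mulrA.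
Qed.

Lemma h1m : (a1 < m)%N. Proof. lia. Qed.
Lemma h2m : (a2 < m)%N. Proof. lia. Qed.
Lemma h3m : (a3 < m)%N. Proof. lia. Qed.

Lemma S4_13 : S4 (fun p q r s => DD p r) = dblock d pi b mu a1 a3.
Proof.
rewrite /S4 dblock2.
under eq_bigr => p _ do under eq_bigr => q _ do under eq_bigr => r _ do rewrite (coll _ h4m).
by under eq_bigr => p _ do rewrite (coll _ h2m).
Qed.

Lemma S4_24 : S4 (fun p q r s => DD q s) = dblock d pi b mu a2 a4.
Proof.
rewrite /S4 dblock2.
under eq_bigr => p _ do under eq_bigr => q _ do rewrite (coll _ h3m).
by rewrite (coll _ h1m).
Qed.

Lemma S4_12 : S4 (fun p q r s => DD p q) = dblock d pi b mu a1 a2.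
Proof.
rewrite /S4 dblock2.
under eq_bigr => p _ do under eq_bigr => q _ do under eq_bigr => r _ do rewrite (coll _ h4m).
by under eq_bigr => p _ do under eq_bigr => q _ do rewrite (coll _ h3m).
Qed.

Lemma S4_34 : S4 (fun p q r s => DD r s) = dblock d pi b mu a3 a4.
Proof.
rewrite /S4 dblock2.
under eq_bigr => p _ do rewrite (coll _ h2m).
by rewrite (coll _ h1m).
Qed.

Lemma S4_14 : S4 (fun p q r s => DD p s) = dblock d pi b mu a1 a4.
Proof.
rewrite /S4 dblock2.
under eq_bigr => p _ do under eq_bigr => q _ do rewrite (coll _ h3m).
by under eq_bigr => p _ do rewrite (coll _ h2m).
Qed.

Lemma S4_23 : S4 (fun p q r s => DD q r) = dblock d pi b mu a2 a3.
Proof.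
rewrite /S4 dblock2.
under eq_bigr => p _ do under eq_bigr => q _ do under eq_bigr => r _ do rewrite (coll _ h4m).
by rewrite (coll _ h1m).
Qed.

Lemma S4D f g : S4 (fun p q r s => f p q r s + g p q r s) = S4 f + S4 g.
Proof.
rewrite /S4 -sumD; apply: eq_bigr => p _.
rewrite -mulrDr -sumD; congr (_ * _); apply: eq_bigr => q _.
rewrite -mulrDr -sumD; congr (_ * _); apply: eq_bigr => r _.
rewrite -mulrDr -sumD; congr (_ * _); apply: eq_bigr => s _.
by rewrite -mulrDr.
Qed.

Lemma S4N f : S4 (fun p q r s => - f p q r s) = - S4 f.
Proof.
rewrite /S4 -sumrN; apply: eq_bigr => p _.
rewrite -mulrN -sumrN; congr (_ * _); apply: eq_bigr => q _.
rewrite -mulrN -sumrN; congr (_ * _); apply: eq_bigr => r _.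
rewrite -mulrN -sumrN; congr (_ * _); apply: eq_bigr => s _.
by rewrite mulrN.
Qed.

Lemma ord_lt p q : (b p < b q)%N -> (p < q)%N.
Proof.
move=> h; rewrite ltnNge; apply/negP => hqp.
have := hb q p hqp; lia.
Qed.

Lemma S4_ge0 f :
  (forall p q r s, b p = a1 :> nat -> b q = a2 :> nat -> b r = a3 :> nat -> b s = a4 :> nat ->
     0 <= f p q r s) -> 0 <= S4 f.
Proof.
have w0 : forall p, 0 <= ww p by move=> p; exact: hmu.1.
move=> hf; rewrite /S4; apply: sumr_ge0 => p /eqP hp; apply: mulr_ge0 => //.
apply: sumr_ge0 => q /eqP hq; apply: mulr_ge0 => //.
apply: sumr_ge0 => r /eqP hr; apply: mulr_ge0 => //.
apply: sumr_ge0 => s /eqP hs; apply: mulr_ge0 => //.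
exact: hf.
Qed.

Lemma blockK :
  dblock d pi b mu a1 a2 + dblock d pi b mu a3 a4 <= dblock d pi b mu a1 a3 + dblock d pi b mu a2 a4 /\
  dblock d pi b mu a1 a4 + dblock d pi b mu a2 a3 <= dblock d pi b mu a1 a3 + dblock d pi b mu a2 a4.
Proof.
have key : forall p q r s, b p = a1 :> nat -> b q = a2 :> nat -> b r = a3 :> nat -> b s = a4 :> nat ->
   DD p q + DD r s <= DD p r + DD q s /\ DD p s + DD q r <= DD p r + DD q s.
  move=> p q r s hp hq hr hs.
  have pq : (p < q)%N by apply: ord_lt; rewrite hp hq.
  have qr : (q < r)%N by apply: ord_lt; rewrite hq hr.
  have rs : (r < s)%N by apply: ord_lt; rewrite hr hs.
  exact: (hK p q r s pq qr rs).
split.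
- have e : S4 (fun p q r s => DD p r + DD q s + - DD p q + - DD r s)
     = dblock d pi b mu a1 a3 + dblock d pi b mu a2 a4 - dblock d pi b mu a1 a2 - dblock d pi b mu a3 a4.
    by rewrite !S4D !S4N S4_13 S4_24 S4_12 S4_34.
  have : 0 <= S4 (fun p q r s => DD p r + DD q s + - DD p q + - DD r s).
    apply: S4_ge0 => p q r s hp hq hr hs.
    have [k1 _] := key p q r s hp hq hr hs. lra.
  rewrite e; lra.
- have e : S4 (fun p q r s => DD p r + DD q s + - DD p s + - DD q r)
     = dblock d pi b mu a1 a3 + dblock d pi b mu a2 a4 - dblock d pi b mu a1 a4 - dblock d pi b mu a2 a3.
    by rewrite !S4D !S4N S4_13 S4_24 S4_14 S4_23.
  have : 0 <= S4 (fun p q r s => DD p r + DD q s + - DD p s + - DD q r).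
    apply: S4_ge0 => p q r s hp hq hr hs.
    have [_ k2] := key p q r s hp hq hr hs. lra.
  rewrite e; lra.
Qed.

End BK.

Unset Implicit Arguments.
Import Order.TTheory GRing.Theory Num.Theory.
Local Open Scope ring_scope.
Lemma neq_succ k m : (k < m)%N -> (1 < m)%N -> k != ((k + 1) %% m)%N.
Proof.
move=> hk hm; case: (ltnP (k + 1) m) => h.
  by rewrite modn_small //; apply/eqP; lia.
have -> : (k + 1 = m)%N by lia.
by rewrite modnn; apply/eqP; lia.
Qed.

Theorem mainTheorem10 (R : realFieldType) (n m : nat)
  (d : 'I_n -> 'I_n -> R) (pi : {perm 'I_n}) (b : 'I_n -> 'I_m) (mu : 'I_n -> R)
  (hd : dissimilarity d) (hK : kalmanson d pi)
  (hb : consecutive_blocks b) (hmu : block_weighting pi b mu)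
  (i j : nat) (hij : (i + 3 < j)%N) (hj : (j < m)%N) :
  exists k : 'I_m, 0 <= Qd d pi b mu i j - Qd d pi b mu k ((k + 1) %% m)%N.
Proof.
pose Z := fun r s : nat => if r == s then 0 else dblock d pi b mu r s.
have hZ0 : forall x, Z x x = 0 by move=> x; rewrite /Z eqxx.
have hZs : forall x y, Z x y = Z y x.
  move=> x y; rewrite /Z eq_sym; case: eqP => // _; apply: dblock_sym; exact: hd.1.
have hZK : KalZ Z m.
  move=> a1 a2 a3 a4 h1 h2 h3 h4.
  rewrite /Z !ifF; try (apply/eqP; lia).
  exact: (blockK _ _ _ _ _ _ _ hK hb hmu _ _ _ _ h1 h2 h3 h4).
have hQ : forall r s, r != s -> Qd d pi b mu r s = QZ Z m r s.
  move=> r s hrs; rewrite /Qd /QZ /Z (negbTE hrs).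
  have S u : \sum_(t < m | (t : nat) != u) dblock d pi b mu u t
           = \sum_(t < m) (if u == t then 0 else dblock d pi b mu u t).
    rewrite big_mkcond /=; apply: eq_bigr => t _.
    by rewrite eq_sym; case: (u == t).
  by rewrite !S.
have hm1 : (1 < m)%N by lia.
have hij' : i != j by apply/eqP; lia.
case: (leqP ((j - i) + (j - i)) m) => hcase.
- have him : (i < m)%N by lia.
  have [k hk H] := main_rot hZ0 hZs hZK him (ltac:(lia) : (0 < j - i)%N) hcase.
  exists (Ordinal hk) => /=.
  rewrite hQ // hQ; last exact: neq_succ.
  rewrite subnK in H; last lia. by rewrite (modn_small hj) in H.
- have hjm' : (m - (j - i) + (m - (j - i)) <= m)%N by lia.
  have [k hk H] := main_rot hZ0 hZs hZK hj (ltac:(lia) : (0 < m - (j - i))%N) hjm'.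
  exists (Ordinal hk) => /=.
  rewrite hQ // hQ; last exact: neq_succ.
  have e : (m - (j - i) + j = m + i)%N by lia.
  rewrite e modnDl modn_small in H; last lia.
  by rewrite QZ_sym.
Qed.
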